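(* Let $G$ be a graph on at most $n$ vertices that contains no copy of the complete graph $K_5$. Then $\tilde b(G)\le 3^{n/4}$.
   Context: $\mathrm{Ind}(G)$ is the independence complex of $G$ (including the empty face), and $\tilde b(G)=\sum_{i\ge-1}\dim_{\mathbb{K}}\widetilde H_i(\mathrm{Ind}(G);\mathbb{K})$ for a fixed field $\mathbb{K}$; the empty graph has $\tilde b=1$. *)

(* Defs.v *)
From mathcomp Require Import all_boot all_order all_algebra.
From Stdlib Require Import Reals.
Set Implicit Arguments. Unset Strict Implicit. Unset Printing Implicit Defensive.
Import GRing.Theory.

Section IndComplex.
Variable T : finType.
Variable e : rel T.

Definition indep (A : {set T}) : bool :=
  [forall x in A, forall y in A, ~~ e x y].

(* Faces of Ind(G) with exactly k vertices (dimension k-1); faces 0 = {empty face}. *)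
Definition faces (k : nat) : {set {set T}} :=
  [set A : {set T} | indep A & #|A| == k].

Definition pos (A : {set T}) (v : T) : nat :=
  #|[set u in A | (enum_rank u < enum_rank v)%N]|.

Local Open Scope ring_scope.

(* Reduced simplicial boundary map C_{k} -> C_{k-1} (chains with k+1 -> k vertices),
   as a matrix acting on row vectors; k = 0 is the augmentation to the empty face. *)
Definition bdmx (K : fieldType) (k : nat) : 'M[K]_(#|faces k.+1|, #|faces k|) :=
  \matrix_(i, j)
    \sum_(v in (@enum_val _ (mem (faces k.+1)) i))
      (((@enum_val _ (mem (faces k)) j) == (@enum_val _ (mem (faces k.+1)) i) :\ v)%:R
        * (-1) ^+ pos (@enum_val _ (mem (faces k.+1)) i) v).

Local Close Scope ring_scope.

(* dim_K of reduced homology of Ind(G) in degree k-1 (faces with k vertices):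
   dim C - rank(outgoing boundary) - rank(incoming boundary). *)
Definition betti (K : fieldType) (k : nat) : nat :=
  (#|faces k| - (if k is k'.+1 then \rank (bdmx K k') else 0%N)
     - \rank (bdmx K k))%N.

Definition tot_betti (K : fieldType) : nat :=
  (\sum_(k < #|T|.+1) betti K k)%N.

End IndComplex.

Definition simple_graph (T : finType) (e : rel T) : Prop :=
  irreflexive e /\ symmetric e.

Definition K5_free (T : finType) (e : rel T) : Prop :=
  forall S : {set T}, #|S| = 5%N ->
    ~ (forall x y, x \in S -> y \in S -> x != y -> e x y).

(* Main.v *)
Require Import Defs.
From mathcomp Require Import all_boot all_order all_algebra.
From mathcomp Require Import ring zify.
Set Implicit Arguments. Unset Strict Implicit. Unset Printing Implicit Defensive.
Import GRing.Theory.

Section Homology.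
Variable K : fieldType. Variable T : finType. Variable e : rel T.
Local Notation F k := (faces e k).
Definition fv k (i : 'I_#|F k|) : {set T} := @enum_val _ (mem (F k)) i.

Local Open Scope ring_scope.
Definition dm (P : {set T} -> bool) k : 'M[K]_#|F k| := diag_mx (\row_i (P (fv i))%:R).
Definition msk (W : {set T}) k := dm (fun A => A \subset W) k.
Definition rW (W : {set T}) k := \rank (msk W k.+1 *m bdmx e K k *m msk W k).
Definition dW (W : {set T}) k := \rank (msk W k).
Definition rprev (W : {set T}) k := if k is k'.+1 then rW W k' else 0%nat.
Definition hW (W : {set T}) k := (dW W k - rprev W k - rW W k)%nat.
Definition bW (W : {set T}) := (\sum_(k < #|T|.+1) hW W k)%nat.

Lemma msk_setT k : msk setT k = 1%:M.
Proof. by apply/matrixP=> i j; rewrite !mxE subsetT. Qed.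

Lemma bW_setT : bW setT = tot_betti e K.
Proof.
rewrite /bW /tot_betti; apply: eq_bigr => -[k _] _ /=.
rewrite /hW /betti /dW /rprev /rW.
by case: k => [|k] /=; rewrite !msk_setT mxrank1 ?mul1mx ?mulmx1.
Qed.

Lemma fv_inj k : injective (@fv k).
Proof. exact: enum_val_inj. Qed.

Lemma fvP k (i : 'I_#|F k|) : fv i \in F k.
Proof. exact: enum_valP. Qed.

Lemma fv_surj k (S : {set T}) : S \in F k -> exists i : 'I_#|F k|, fv i = S.
Proof. by move=> HS; exists (enum_rank_in HS S); rewrite /fv enum_rankK_in. Qed.

Lemma dmE P k (i j : 'I_#|F k|) : dm P k i j = ((i == j) && P (fv i))%:R.
Proof. by rewrite /dm !mxE; case: eqP => [->|]; case: (P _); rewrite ?mulr1n ?mulr0n. Qed.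

Lemma mul_dm_l P k n (X : 'M[K]_(#|F k|, n)) i j : (dm P k *m X) i j = (P (fv i))%:R * X i j.
Proof. by rewrite /dm mul_diag_mx !mxE. Qed.

Lemma mul_dm_r P k m (X : 'M[K]_(m, #|F k|)) i j : (X *m dm P k) i j = X i j * (P (fv j))%:R.
Proof. by rewrite /dm mul_mx_diag !mxE. Qed.

Lemma sum_fv k (i0 : 'I_#|F k|) (g : 'I_#|F k| -> K) :
  \sum_i ((fv i == fv i0)%:R * g i) = g i0.
Proof.
rewrite (bigD1 i0) //= eqxx mul1r big1 ?addr0 // => i /negbTE ne.
by rewrite (inj_eq (@fv_inj k)) ne mul0r.
Qed.

Lemma sum_fv_r k (i0 : 'I_#|F k|) (g : 'I_#|F k| -> K) :
  \sum_i (g i * (fv i == fv i0)%:R) = g i0.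
Proof. by rewrite -[RHS](sum_fv i0); apply: eq_bigr => i _; rewrite mulrC. Qed.


Local Notation rk := (@enum_rank T).
Local Close Scope ring_scope.

Lemma pos_add (A : {set T}) v w : v \notin A ->
  pos (v |: A) w = (pos A w + (rk v < rk w))%nat.
Proof.
move=> vA; rewrite /pos.
have -> : [set u in v |: A | rk u < rk w] =
   if rk v < rk w then v |: [set u in A | rk u < rk w] else [set u in A | rk u < rk w].
  apply/setP=> u; rewrite !inE; case: (boolP (rk v < rk w)) => h; rewrite ?inE;
  by case: (eqVneq u v) => [->|]; rewrite ?h ?(negbTE h) ?(negbTE vA) //=.
case: ifP => _; last by rewrite addn0.
by rewrite cardsU1 inE (negbTE vA) addnC.
Qed.

Lemma pos_del (A : {set T}) v w : w \in A ->
  pos A v = (pos (A :\ w) v + (rk w < rk v))%nat.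
Proof.
move=> wA; rewrite /pos.
have -> : [set u in A | rk u < rk v] =
   if rk w < rk v then w |: [set u in A :\ w | rk u < rk v] else [set u in A :\ w | rk u < rk v].
  apply/setP=> u; rewrite !inE; case: (boolP (rk w < rk v)) => h; rewrite ?inE;
  case: (eqVneq u w) => [->|] //=; rewrite ?wA ?h //.
  by rewrite (negbTE h) andbF.
case: ifP => _; last by rewrite addn0.
by rewrite cardsU1 !inE eqxx /= addnC.
Qed.

Lemma pos_self (A : {set T}) v : pos (v |: A) v = pos A v.
Proof.
rewrite /pos (_ : [set u in v |: A | rk u < rk v] = [set u in A | rk u < rk v]) //.
apply/setP=> u; rewrite !inE.
by case: (eqVneq u v) => [->|]; rewrite ?ltnn ?andbF.
Qed.

Lemma rk_total v w : w != v -> ((rk v < rk w) + (rk w < rk v))%nat = 1%nat.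
Proof.
move=> ne; have : rk w != rk v by rewrite (inj_eq (@enum_rank_inj T)).
case: (ltngtP (rk v) (rk w)) => // /val_inj ->; by rewrite eqxx.
Qed.

Local Open Scope ring_scope.

Definition sg v (A : {set T}) : K := (-1) ^+ pos A v.
Definition bsum (A B : {set T}) : K := \sum_(w in A) ((B == A :\ w)%:R * (-1) ^+ pos A w).

Lemma bdmxE k i j : bdmx e K k i j = bsum (fv i) (fv j).
Proof. by rewrite mxE. Qed.

Lemma sg2 v A : sg v A * sg v A = 1.
Proof. by rewrite -expr2 sqrr_sign. Qed.

Lemma setU1_eq (v : T) (A B : {set T}) : v \notin A -> v \notin B ->
  (v |: A == v |: B) = (A == B).
Proof.
move=> vA vB; apply/eqP/eqP => [H|->] //; apply/setP => x.
move/setP: H => /(_ x); rewrite !in_setU1.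
by case: (eqVneq x v) => [->|] //=; rewrite (negbTE vA) (negbTE vB).
Qed.

Lemma bsum_lift v (s t : {set T}) : v \notin s -> v \notin t ->
  bsum s t = - (sg v s * sg v t) * bsum (v |: s) (v |: t).
Proof.
move=> vs vt; rewrite /bsum (big_setU1 _ vs) /= setU1K //.
have -> : (v |: t == s) = false.
  by apply/negbTE; apply: contra vs => /eqP <-; rewrite setU11.
rewrite mul0r add0r mulr_sumr; apply: eq_bigr => w ws.
have wv : w != v by apply: contraNneq vs => <-.
have -> : (v |: s) :\ w = v |: (s :\ w).
  apply/setP => x; rewrite !inE; by case: (eqVneq x v) => [->|] //=; rewrite eq_sym wv.
rewrite setU1_eq //; last by rewrite !inE negb_and vs orbT.
case: eqP => [->|_]; last by rewrite !mul0r mulr0.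
rewrite /sg (pos_add _ vs) (pos_del v ws) !mul1r !exprD.
set X := (-1) ^+ pos (s :\ w) v.
have hX : X * X = 1 by rewrite -expr2 sqrr_sign.
have hBC : (-1) ^+ (rk w < rk v)%N * (-1) ^+ (rk v < rk w)%N = -1 :> K.
  by rewrite -exprD addnC rk_total // expr1.
set B := (-1) ^+ (rk w < rk v)%N in hBC *. set C := (-1) ^+ (rk v < rk w)%N in hBC *.
set Aa := (-1) ^+ pos s w.
have -> : - (X * B * X) * (Aa * C) = - ((X * X) * (B * C)) * Aa by ring.
by rewrite hX hBC; ring.
Qed.

Lemma bsum_cone v (s t : {set T}) : v \notin s -> v \notin t ->
  sg v s * bsum (v |: s) t = (t == s)%:R.
Proof.
move=> vs vt; rewrite /bsum (big_setU1 _ vs) /= setU1K // big1 ?addr0.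
  by rewrite pos_self mulrCA -/(sg v s) sg2 mulr1.
move=> w ws; have wv : w != v by apply: contraNneq vs => <-.
suff -> : (t == (v |: s) :\ w) = false by rewrite mul0r.
apply/negbTE; apply: contra vt => /eqP ->; by rewrite !inE eq_sym wv eqxx.
Qed.

Lemma bsum_zero v (s t : {set T}) : v \notin s -> v \in t -> bsum s t = 0.
Proof.
move=> vs vt; rewrite /bsum big1 // => w _.
suff -> : (t == s :\ w) = false by rewrite mul0r.
by apply/negbTE; apply: contra vs => /eqP ht; move: vt; rewrite ht => /setD1P[].
Qed.

Lemma facesE k (A : {set T}) : (A \in F k) = indep e A && (#|A| == k).
Proof. by rewrite inE. Qed.

Hypothesis irr : irreflexive e.
Hypothesis sym : symmetric e.

Lemma face_add k (A : {set T}) v : A \in F k -> v \notin A ->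
  (forall x, x \in A -> ~~ e v x) -> v |: A \in F k.+1.
Proof.
rewrite !facesE => /andP[/forallP iA /eqP cA] vA hv.
rewrite cardsU1 vA cA eqxx andbT; apply/forallP => x; apply/implyP => hx.
apply/forallP => y; apply/implyP => hy.
move: hx hy; rewrite !in_setU1 => /orP[/eqP->|xA] /orP[/eqP->|yA].
- by rewrite irr.
- exact: hv.
- by rewrite sym hv.
- by move/implyP: (iA x) => /(_ xA) /forallP /(_ y) /implyP /(_ yA).
Qed.

Lemma face_del k (A : {set T}) v : A \in F k.+1 -> v \in A -> A :\ v \in F k.
Proof.
rewrite !facesE => /andP[/forallP iA /eqP cA] vA.
rewrite (cardsD1 v A) vA add1n in cA; case: cA => ->; rewrite eqxx andbT.
apply/forallP => x; apply/implyP => /setD1P[_ xA].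
apply/forallP => y; apply/implyP => /setD1P[_ yA].
by move/implyP: (iA x) => /(_ xA) /forallP /(_ y) /implyP /(_ yA).
Qed.

Lemma face_indep k (A : {set T}) x y : A \in F k -> x \in A -> y \in A -> ~~ e x y.
Proof.
rewrite facesE => /andP[/forallP iA _] xA yA.
by move/implyP: (iA x) => /(_ xA) /forallP /(_ y) /implyP /(_ yA).
Qed.

Variable v : T.

Definition Jm (S : {set T}) k : 'M[K]_(#|F k|, #|F k.+1|) :=
  \matrix_(i, j) (((fv i \subset S) && (fv j == v |: fv i))%:R * sg v (fv i)).
Definition Km (S : {set T}) k : 'M[K]_(#|F k.+1|, #|F k|) :=
  \matrix_(i, j) (((fv j \subset S) && (fv i == v |: fv j))%:R * sg v (fv j)).

Lemma mulJ (S : {set T}) k m (Y : 'M[K]_(#|F k.+1|, m)) i j (r0 : 'I_#|F k.+1|) :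
  fv r0 = v |: fv i -> (Jm S k *m Y) i j = (fv i \subset S)%:R * sg v (fv i) * Y r0 j.
Proof.
move=> h0; rewrite mxE -(sum_fv r0 (fun r => (fv i \subset S)%:R * sg v (fv i) * Y r j)).
apply: eq_bigr => r _; rewrite mxE h0.
by case: (fv i \subset S); case: (_ == _); rewrite /= ?mul0r ?mul1r ?mulr0 ?mul0r.
Qed.

Lemma mulJ0 (S : {set T}) k m (Y : 'M[K]_(#|F k.+1|, m)) i j :
  ~~ (fv i \subset S) -> (Jm S k *m Y) i j = 0.
Proof. by move=> h; rewrite mxE big1 // => r _; rewrite mxE (negbTE h) /= !mul0r. Qed.

Lemma mulK (S : {set T}) k m (Y : 'M[K]_(m, #|F k.+1|)) i j (r0 : 'I_#|F k.+1|) :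
  fv r0 = v |: fv j -> (Y *m Km S k) i j = Y i r0 * ((fv j \subset S)%:R * sg v (fv j)).
Proof.
move=> h0; rewrite mxE -(sum_fv r0 (fun r => Y i r * ((fv j \subset S)%:R * sg v (fv j)))).
apply: eq_bigr => r _; rewrite mxE h0.
by case: (fv j \subset S); case: (_ == _); rewrite /= ?mul0r ?mul1r ?mulr0 ?mul0r.
Qed.

Lemma mulK0 (S : {set T}) k m (Y : 'M[K]_(m, #|F k.+1|)) i j :
  ~~ (fv j \subset S) -> (Y *m Km S k) i j = 0.
Proof. by move=> h; rewrite mxE big1 // => r _; rewrite mxE (negbTE h) /= !mul0r mulr0. Qed.

Lemma NE (W : {set T}) k i j : (msk W k.+1 *m bdmx e K k *m msk W k) i j =
  (fv i \subset W)%:R * bsum (fv i) (fv j) * (fv j \subset W)%:R.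
Proof. by rewrite mul_dm_r mul_dm_l bdmxE. Qed.

Lemma msk_subl (A W : {set T}) k : A \subset W -> msk A k *m msk W k = msk A k.
Proof.
move=> AW; apply/matrixP => i j; rewrite mul_dm_r !dmE.
case: (eqVneq i j) => [->|] /=; last by rewrite mul0r.
by case: (boolP (fv j \subset A)) => h /=; rewrite ?mul0r // (subset_trans h AW) mulr1.
Qed.

Lemma msk_subr (A W : {set T}) k : A \subset W -> msk W k *m msk A k = msk A k.
Proof.
move=> AW; apply/matrixP => i j; rewrite mul_dm_r !dmE.
case: (eqVneq i j) => [->|] /=; last by rewrite mul0r.
by case: (boolP (fv j \subset A)) => h /=; rewrite ?mulr0 // (subset_trans h AW) mulr1.
Qed.

Lemma cone_rank (W : {set T}) k : v \in W -> (forall x, x \in W -> ~~ e v x) ->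
  (dW (W :\ v) k <= rW W k)%N.
Proof.
move=> vW hW; set A := W :\ v.
have AW : A \subset W by apply: subsetDl.
have E : msk A k = Jm A k *m (msk W k.+1 *m bdmx e K k *m msk W k) *m msk A k.
  apply/matrixP => i j; rewrite mul_dm_r dmE.
  case: (boolP (fv i \subset A)) => hi; last by rewrite mulJ0 // mul0r andbF.
  have viA : v \notin fv i by apply: contraTN hi => vi; apply/subsetPn; exists v => //; rewrite !inE eqxx.
  have : v |: fv i \in F k.+1.
    apply: face_add (fvP i) viA _ => x xi; apply: hW; exact: (subsetP AW _ (subsetP hi _ xi)).
  case/fv_surj => r0 h0; rewrite (@mulJ A k _ _ i j r0 h0) hi NE h0 andbT.
  have -> : v |: fv i \subset W by rewrite subUset sub1set vW (subset_trans hi AW).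
  case: (boolP (fv j \subset A)) => hj; last first.
    rewrite !mulr0; case: eqP => // ij; by move: hj; rewrite -ij hi.
  have vjA : v \notin fv j by apply: contraTN hj => vj; apply/subsetPn; exists v => //; rewrite !inE eqxx.
  rewrite (subset_trans hj AW) /= !mulr1.
  have := bsum_cone viA vjA; rewrite (inj_eq (@fv_inj k)) eq_sym => <-; by rewrite !mulr1n !mul1r.
rewrite /dW E; apply: leq_trans (mxrankM_maxl _ _) _; exact: mxrankM_maxr.
Qed.

Definition dmV (W : {set T}) k := dm (fun X => (X \subset W) && (v \in X)) k.

Lemma dm_split (W : {set T}) k : msk W k = msk (W :\ v) k + dmV W k.
Proof.
apply/matrixP => i j; rewrite /msk /dmV [RHS]mxE !dmE subsetD1.
case: (i == j) => //=; last by rewrite addr0.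
by case: (fv i \subset W); case: (v \in fv i); rewrite /= ?addr0 ?add0r.
Qed.

Lemma dmV_fact_end (W L : {set T}) k r' t0 : v \notin L -> fv t0 \subset L ->
  sg v (fv t0) * Jm L k t0 r' = (fv r' == v |: fv t0)%:R.
Proof.
move=> vL tL; rewrite mxE tL /= mulrCA.
by rewrite sg2 mulr1.
Qed.

Lemma dmV_fact (W L : {set T}) k : v \in W -> L \subset W -> v \notin L ->
  (forall r : 'I_#|F k.+1|, fv r \subset W -> v \in fv r -> fv r :\ v \subset L) ->
  dmV W k.+1 = Km L k *m msk L k *m Jm L k.
Proof.
move=> vW LW vL hL; apply/matrixP => r r'; rewrite /dmV dmE mxE.
case: (boolP ((fv r \subset W) && (v \in fv r))) => [/andP[rW vr]|hn]; last first.
  rewrite andbF big1 // => t _; rewrite mul_dm_r mxE.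
  case: (boolP (fv t \subset L)) => tL /=; last by rewrite !mulr0 mul0r.
  case: eqP => [hr|_] /=; last by rewrite !mul0r.
  case/negP: hn; rewrite hr in_setU1 eqxx andbT subUset sub1set vW.
  exact: subset_trans tL LW.
have [t0 h0] := fv_surj (face_del (fvP r) vr).
have t0L : fv t0 \subset L by rewrite h0; exact: hL.
rewrite andbT (_ : \sum_t _ = sg v (fv t0) * Jm L k t0 r').
  by rewrite (dmV_fact_end W) // h0 setD1K // (inj_eq (@fv_inj _)) eq_sym.
rewrite -(sum_fv t0 (fun t => sg v (fv t) * Jm L k t r')); apply: eq_bigr => t _.
rewrite mul_dm_r mxE.
case: (eqVneq t t0) => [->|ne].
  rewrite t0L h0 setD1K // !eqxx /=; by rewrite !mulr1n !mul1r mulr1.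
rewrite (inj_eq (@fv_inj _)) (negbTE ne).
suff -> : (fv t \subset L) && (fv r == v |: fv t) = false by rewrite /= !mul0r.
apply/negbTE/negP => /andP[tL /eqP hr]; case/eqP: ne; apply: fv_inj; rewrite h0 hr setU1K //.
by apply: contra vL => vt; exact: (subsetP tL).
Qed.


Lemma dim_step (W L : {set T}) k : v \in W -> L \subset W -> v \notin L ->
  (forall r : 'I_#|F k.+1|, fv r \subset W -> v \in fv r -> fv r :\ v \subset L) ->
  (dW W k.+1 <= dW (W :\ v) k.+1 + dW L k)%N.
Proof.
move=> vW LW vL hL; rewrite /dW {1}dm_split; apply: leq_trans (mxrank_add _ _) _.
rewrite leq_add2l (dmV_fact vW LW vL hL); apply: leq_trans (mxrankM_maxl _ _) _.
exact: mxrankM_maxr.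
Qed.

Lemma dim0 (W : {set T}) : (dW W 0 <= dW (W :\ v) 0)%N.
Proof.
rewrite /dW dm_split (_ : dmV W 0 = 0) ?addr0 //.
apply/matrixP => i j; rewrite /dmV dmE mxE.
have := fvP i; rewrite facesE => /andP[_ /eqP/cards0_eq ->].
by rewrite inE !andbF.
Qed.

Lemma subsetD1n (A W : {set T}) : A \subset W :\ v -> v \notin A.
Proof. by move=> h; apply/negP => /(subsetP h); rewrite !inE eqxx. Qed.

Lemma rank_step (W L : {set T}) k : v \in W -> L \subset W ->
  (forall x, x \in L -> (x != v) && ~~ e v x) ->
  (rW (W :\ v) k.+1 + rW L k <= rW W k.+1)%N.
Proof.
move=> vW LW hL; set A := W :\ v.
have AW : A \subset W by apply: subsetDl.
have vL : v \notin L by apply/negP => /hL; rewrite eqxx.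
have subLv : forall X : {set T}, X \subset L -> v \notin X.
  by move=> X XL; apply: contra vL; apply: (subsetP XL).
have addv : forall kk (i : 'I_#|F kk|), fv i \subset L -> exists r : 'I_#|F kk.+1|, fv r = v |: fv i.
  move=> kk i iL; apply: fv_surj; apply: face_add (fvP i) (subLv _ iL) _.
  by move=> x /(subsetP iL) /hL /andP[].
set N := msk W k.+2 *m bdmx e K k.+1 *m msk W k.+1.
set P := msk A k.+2; set Q := dmV W k.+1.
have PNQ : P *m N *m Q = 0.
  apply/matrixP => i j; rewrite [RHS]mxE /Q /dmV mul_dm_r /P mul_dm_l /N NE.
  case: (boolP (fv i \subset A)) => hi; last by rewrite !mul0r.
  case: (boolP (v \in fv j)) => hj; last by rewrite andbF mulr0.
  have hv : v \notin fv i by exact: (@subsetD1n (fv i) W hi).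
  by rewrite (@bsum_zero v) // mulr0 !mul0r mulr0 mul0r.
have key := mxrank_mul_ker N Q.
have h1 : (\rank (P *m N) <= \rank (N :&: kermx Q))%N.
  by apply: mxrankS; rewrite sub_capmx submxMl sub_kermx PNQ eqxx.
have h2 : (rW A k.+1 <= \rank (P *m N))%N.
  rewrite /rW (_ : msk A k.+2 *m bdmx e K k.+1 *m msk A k.+1 = P *m N *m msk A k.+1).
    exact: mxrankM_maxl.
  by rewrite /P /N !mulmxA msk_subl // -!mulmxA msk_subr.
have h3 : (rW L k <= \rank (N *m Q))%N.
  rewrite /rW (_ : msk L k.+1 *m bdmx e K k *m msk L k = - (Jm L k.+1 *m (N *m Q) *m Km L k)).
    by rewrite mxrank_opp; apply: leq_trans (mxrankM_maxl _ _) _; exact: mxrankM_maxr.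
  apply/matrixP => i j; rewrite NE [RHS]mxE.
  case: (boolP (fv j \subset L)) => hj; last by rewrite mulK0 // oppr0 mulr0.
  have [r1 h1'] := addv _ j hj.
  rewrite (@mulK L k _ _ i j r1 h1') hj.
  case: (boolP (fv i \subset L)) => hi; last by rewrite mulJ0 // !mul0r oppr0.
  have [r0 h0] := addv _ i hi.
  rewrite (@mulJ L k.+1 _ _ i r1 r0 h0) hi /Q /dmV mul_dm_r /N NE h0 h1'.
  have vW' : forall X : {set T}, X \subset L -> v |: X \subset W.
    by move=> X XL; rewrite subUset sub1set vW (subset_trans XL LW).
  rewrite !vW' // setU11 (bsum_lift (subLv _ hi) (subLv _ hj)) /=.
  rewrite !mulr1n; ring.
have -> : rW W k.+1 = \rank N by [].
rewrite -key; lia.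
Qed.

Lemma rank0 (W : {set T}) : (rW (W :\ v) 0 <= rW W 0)%N.
Proof.
rewrite /rW; set N := msk W 1 *m bdmx e K 0 *m msk W 0; set A := W :\ v.
have AW : A \subset W by apply: subsetDl.
rewrite (_ : msk A 1 *m bdmx e K 0 *m msk A 0 = msk A 1 *m N *m msk A 0).
  by apply: leq_trans (mxrankM_maxl _ _) _; exact: mxrankM_maxr.
by rewrite /N !mulmxA msk_subl // -!mulmxA msk_subr.
Qed.

Local Close Scope ring_scope.

Definition Nv := v |: [set x | e v x].

Lemma L_props (W : {set T}) : let L := W :\: Nv in
  [/\ L \subset W, forall x, x \in L -> (x != v) && ~~ e v x & v \notin L].
Proof.
split; first exact: subsetDl.
  by move=> x; rewrite !inE negb_or => /andP[/andP[-> ->]].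
by rewrite !inE eqxx.
Qed.

Lemma L_faces (W : {set T}) k (r : 'I_#|F k.+1|) : fv r \subset W -> v \in fv r ->
  fv r :\ v \subset W :\: Nv.
Proof.
move=> rW vr; apply/subsetP => x /setD1P[xv xr].
rewrite !inE (subsetP rW _ xr) negb_or xv andbT /=.
by apply: (face_indep (fvP r) vr xr).
Qed.

Lemma h_step (W : {set T}) k : v \in W ->
  hW W k.+1 <= hW (W :\ v) k.+1 + hW (W :\: Nv) k.
Proof.
move=> vW; have [LW hL vL] := L_props W.
have d1 := dim_step (k:=k) vW LW vL (@L_faces W k).
have r2 := rank_step k vW LW hL.
have r1 : rW (W :\ v) k + rprev (W :\: Nv) k <= rW W k.
  case: k d1 r2 => [|k] _ _ /=; first by rewrite addn0 rank0.
  exact: rank_step.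
rewrite /hW /=; move: d1 r1 r2; rewrite /rprev /=; lia.
Qed.

Lemma h_step0 (W : {set T}) : hW W 0 <= hW (W :\ v) 0.
Proof. rewrite /hW /rprev; have := dim0 W; have := rank0 W; lia. Qed.

Lemma b_step (W : {set T}) : v \in W -> bW W <= bW (W :\ v) + bW (W :\: Nv).
Proof.
move=> vW; rewrite /bW [X in X <= _]big_ord_recl [X in _ <= X + _]big_ord_recl [X in _ <= _ + X]big_ord_recr /=.
set n := #|T|.
have H : \sum_(i < n) hW W (bump 0 i) <=
   \sum_(i < n) hW (W :\ v) (bump 0 i) + \sum_(i < n) hW (W :\: Nv) i.
  rewrite -big_split /=; apply: leq_sum => i _; exact: h_step.
apply: (leq_trans (leq_add (h_step0 W) H)); by rewrite !addnA leq_addr.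
Qed.

Lemma b_cone (W : {set T}) : v \in W -> (forall x, x \in W -> ~~ e v x) -> bW W = 0.
Proof.
move=> vW hiso; rewrite /bW big1 // => -[k _] _ /=.
set A := W :\ v.
have AW : A \subset W by apply: subsetDl.
have vA : v \notin A by rewrite !inE eqxx.
have hF : forall kk (r : 'I_#|F kk.+1|), fv r \subset W -> v \in fv r -> fv r :\ v \subset A.
  by move=> kk r rW vr; apply/subsetP => x /setD1P[xv xr]; rewrite !inE xv (subsetP rW _ xr).
case: k => [|k]; rewrite /hW /rprev.
  have := dim0 W; have := cone_rank 0 vW hiso; rewrite -/A; lia.
have := dim_step vW AW vA (hF k); have := cone_rank k vW hiso; have := cone_rank k.+1 vW hiso.
rewrite -/A; lia.
Qed.

End Homology.

Lemma b_empty (K : fieldType) (T : finType) (e : rel T) : bW K e set0 <= 1.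
Proof.
rewrite /bW big_ord_recl big1 ?addn0; last first.
  move=> i _; rewrite /hW /dW (_ : msk K e set0 (bump 0 i) = 0%R) ?mxrank0 //.
  apply/matrixP => a b; rewrite /msk dmE mxE subset0.
  have := fvP a; rewrite facesE => /andP[_ /eqP ci].
  suff -> : (fv a == set0) = false by rewrite andbF.
  by apply/negbTE; apply/eqP => h; move: ci; rewrite h cards0.
rewrite /hW /dW; apply: leq_trans (leq_subr _ _) _; apply: leq_trans (leq_subr _ _) _.
apply: leq_trans (rank_leq_row _) _; rewrite -(cards1 (@set0 T)).
apply: subset_leq_card; apply/subsetP => A; rewrite facesE => /andP[_ /eqP/cards0_eq ->].
by rewrite inE.
Qed.


Section Comb.
Variable K : fieldType. Variable T : finType. Variable e : rel T.
Hypothesis irr : irreflexive e.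
Hypothesis sym : symmetric e.
Local Notation b W := (bW K e W).

Lemma b_step' u (W : {set T}) : b W <= b (W :\ u) + b (W :\: Nv e u).
Proof.
case: (boolP (u \in W)) => uW; first exact: b_step.
have -> : W :\ u = W.
  by apply/setP => x; rewrite !inE; case: (eqVneq x u) => [->|] //=; rewrite (negbTE uW).
exact: leq_addr.
Qed.

Lemma chain v (s : seq T) : forall W : {set T}, v \in W ->
  (forall u, u \in s -> e v u) -> (forall x, x \in W -> e v x -> x \in s) ->
  b W <= \sum_(i < size s) b (W :\: ([set x in take i s] :|: Nv e (nth v s i))).
Proof.
elim: s => [|u s IH] W vW hs hW /=.
  rewrite big_ord0 (b_cone K irr sym vW) // => x xW; apply/negP => /(hW _ xW).
  by rewrite in_nil.
rewrite big_ord_recl /=.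
have -> : [set x in [::]] :|: Nv e u = Nv e u.
  by apply/setP => x; rewrite !inE.
apply: leq_trans (b_step' u W) _; rewrite addnC leq_add2l.
have uv : u != v.
  by apply/negP => /eqP uv; move: (hs u (mem_head _ _)); rewrite uv irr.
apply: leq_trans (IH (W :\ u) _ _ _) _.
- by rewrite !inE eq_sym uv.
- by move=> x xs; apply: hs; rewrite inE xs orbT.
- move=> x /setD1P[xu xW] ex; have := hW x xW ex; rewrite inE (negbTE xu) //.
apply: eq_leq; apply: eq_bigr => i _; congr (b _).
apply/setP => x; rewrite !inE /bump /= add0n.
by case: (x == u); rewrite /= ?andbF ?andbT //=.
Qed.

Definition deg (W : {set T}) x := #|[set y in W | e x y]|.

Lemma size_gen (W Y Z : {set T}) : Z \subset W :&: Y -> #|W :\: Y| + #|Z| <= #|W|.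
Proof.
move=> ZY; rewrite cardsD; have := subset_leq_card ZY.
have := subset_leq_card (subsetIl W Y); lia.
Qed.

Lemma size_bound1 (W X : {set T}) u : u \in W ->
  #|W :\: (X :|: Nv e u)| + (deg W u).+1 <= #|W|.
Proof.
move=> uW; have -> : (deg W u).+1 = #|u |: [set y in W | e u y]|.
  by rewrite cardsU1 inE irr andbF.
apply: size_gen; apply/subsetP => x; rewrite !inE.
by case/orP => [/eqP ->|/andP[-> ->]]; rewrite ?uW ?eqxx ?orbT.
Qed.

Lemma size_bound2 (W X : {set T}) u a : u \in W -> a \in W -> a \in X -> a != u -> ~~ e u a ->
  #|W :\: (X :|: Nv e u)| + (deg W u).+2 <= #|W|.
Proof.
move=> uW aW aX au eua.
have -> : (deg W u).+2 = #|a |: (u |: [set y in W | e u y])|.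
  by rewrite cardsU1 cardsU1 !inE irr andbF (negbTE au) (negbTE eua) andbF.
apply: size_gen; apply/subsetP => x; rewrite !inE.
case/orP => [/eqP ->|]; first by rewrite aW aX.
by case/orP => [/eqP ->|/andP[-> ->]]; rewrite ?uW ?eqxx ?orbT.
Qed.

Lemma size_Nv (W : {set T}) u : u \in W -> #|W :\: Nv e u| + (deg W u).+1 <= #|W|.
Proof. by move=> uW; have := size_bound1 set0 uW; rewrite set0U. Qed.

Lemma size_D1 (W : {set T}) u : u \in W -> #|W :\ u| + 1 = #|W|.
Proof. by move=> uW; rewrite (cardsD1 u W) uW addnC. Qed.

End Comb.

From Stdlib Require Import Reals Lra Psatz.

Definition c3 : R := Rpower 3 (/ 4).

Lemma c3_pos : (0 < c3)%R.
Proof. rewrite /c3 /Rpower; exact: exp_pos. Qed.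

Lemma c3_4 : (c3 ^ 4 = 3)%R.
Proof.
rewrite -Rpower_pow; last exact: c3_pos.
rewrite /c3 Rpower_mult (_ : (/ 4 * INR 4 = 1)%R); first by rewrite Rpower_1 //; lra.
rewrite (_ : INR 4 = 4%R); first by field.
by rewrite /= ; lra.
Qed.

Lemma c3_gt : (13/10 < c3)%R.
Proof.
case: (Rlt_or_le (13/10) c3) => // h; exfalso.
have : (c3 ^ 4 <= (13/10) ^ 4)%R by apply: pow_incr; have := c3_pos; lra.
rewrite c3_4; simpl; lra.
Qed.

Lemma c3_mono m n : m <= n -> (c3 ^ m <= c3 ^ n)%R.
Proof. move/leP => h; apply: Rle_pow => //; have := c3_gt; lra. Qed.

Lemma INR_leq m n : m <= n -> (INR m <= INR n)%R.
Proof. by move/leP; apply: le_INR. Qed.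

Lemma INR_add m n : INR (m + n) = (INR m + INR n)%R.
Proof. exact: plus_INR. Qed.

Lemma c3_step5 p : (c3 ^ (p + 5) + c3 ^ p <= c3 ^ (p + 6))%R.
Proof.
rewrite !pow_add.
have h4 := c3_4; have hg := c3_gt; have hp : (0 < c3 ^ p)%R by apply: pow_lt; lra.
have -> : (c3 ^ 5 = 3 * c3)%R by rewrite -h4; simpl; ring.
have -> : (c3 ^ 6 = 3 * c3 * c3)%R by rewrite -h4; simpl; ring.
have key : (3 * c3 * c3 - 3 * c3 - 1 > 0)%R by nra.
set q := (c3 ^ p)%R in hp *; nra.
Qed.

Lemma c3_step4 p : (3 * c3 ^ (p + 1) + c3 ^ p <= c3 ^ (p + 6))%R.
Proof.
have := c3_step5 p; rewrite !pow_add.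
have h4 := c3_4; have hg := c3_gt; have hp : (0 < c3 ^ p)%R by apply: pow_lt; lra.
have -> : (c3 ^ 5 = 3 * c3)%R by rewrite -h4; simpl; ring.
simpl; nra.
Qed.

Lemma c3_small d p : d <= 3 -> (INR d * c3 ^ p <= c3 ^ (p + d.+1))%R.
Proof.
move=> hd; rewrite pow_add.
have h4 := c3_4; have hg := c3_gt; have hp : (0 < c3 ^ p)%R by apply: pow_lt; lra.
suff : (INR d <= c3 ^ d.+1)%R by nra.
case: d hd => [|[|[|[|d]]]] // _; simpl; nra.
Qed.

Lemma sum_INR_bound k (f : 'I_k -> nat) (B : R) :
  (forall i, (INR (f i) <= B)%R) -> (INR (\sum_(i < k) f i) <= INR k * B)%R.
Proof.
elim: k f => [|k IH] f hf; first by rewrite big_ord0 /=; lra.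
rewrite big_ord_recr INR_add S_INR.
have := IH (fun i => f (widen_ord (leqnSn k) i)) (fun i => hf _).
have := hf ord_max; move=> ha hb; apply: Rle_trans (Rplus_le_compat _ _ _ _ hb ha) _; lra.
Qed.

Section Main.
Variable K : fieldType. Variable T : finType. Variable e : rel T.
Hypothesis irr : irreflexive e.
Hypothesis sym : symmetric e.
Hypothesis K5 : K5_free e.
Local Notation b W := (bW K e W).

Lemma noK5 (v : T) (S : {set T}) : v \notin S -> #|S| = 4 -> (forall y, y \in S -> e v y) ->
  exists a1 a2, [/\ a1 \in S, a2 \in S, a1 != a2 & ~~ e a1 a2].
Proof.
move=> vS cS hS.
case: (boolP [exists a1 in S, exists a2 in S, (a1 != a2) && ~~ e a1 a2]).
  by case/existsP => a1 /andP[aS /existsP[a2 /andP[bS /andP[ab nab]]]]; exists a1, a2.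
move=> hn; have c5 : #|v |: S| = 5 by rewrite cardsU1 vS cS.
exfalso; apply: (K5 c5).
move=> x y; rewrite !in_setU1 => /orP[/eqP->|xS] /orP[/eqP->|yS] xy.
- by rewrite eqxx in xy.
- exact: hS.
- by rewrite sym hS.
- apply/negPn; apply: contra hn => nxy; apply/existsP; exists x; rewrite xS /=.
  by apply/existsP; exists y; rewrite yS xy.
Qed.

Lemma main m (W : {set T}) : #|W| <= m -> (INR (b W) <= c3 ^ #|W|)%R.
Proof.
elim: m W => [|m IH] W hW.
  have -> : W = set0 by apply/cards0_eq; apply/eqP; rewrite -leqn0.
  rewrite cards0 /=; have := INR_leq (b_empty K e); rewrite /=; lra.
case: (eqVneq W set0) => [->|Wn0].
  rewrite cards0 /=; have := INR_leq (b_empty K e); rewrite /=; lra.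
set n := #|W|.
have IHj : forall (Rs : {set T}) j, #|Rs| + j <= n -> 0 < j -> (INR (b Rs) <= c3 ^ (n - j))%R.
  move=> Rs j hR hj; apply: Rle_trans (IH Rs _) (c3_mono _); rewrite -/n; lia.
case/set0Pn: Wn0 => x0 x0W.
case: (arg_minnP (deg e W) x0W) => v vW vmin.
set d := deg e W v.
have hNv := size_Nv irr vW; rewrite -/d -/n in hNv.
case: (leqP 5 d) => hd.
  apply: Rle_trans (INR_leq (b_step K irr sym vW)) _; rewrite INR_add.
  have h1 := IHj _ 1 (eq_leq (size_D1 vW)) isT.
  have h2 := IHj _ 6 (leq_trans (leq_add (leqnn _) _) hNv) isT.
  rewrite -/n in h1; have {h2} h2 := h2 hd.
  have e1 : n - 6 + 5 = n - 1 by lia.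
  have e2 : n - 6 + 6 = n by lia.
  have := c3_step5 (n - 6); rewrite e1 e2 => h3; lra.
set S := [set y in W | e v y].
have cS : #|S| = d by [].
have SW : forall y, y \in S -> y \in W by move=> y; rewrite inE => /andP[].
have Sv : forall y, y \in S -> e v y by move=> y; rewrite inE => /andP[].
have vS : v \notin S by rewrite inE irr andbF.
have term : forall (s : seq T) (i : 'I_(size s)), {subset s <= S} ->
    #|W :\: ([set x in take i s] :|: Nv e (nth v s i))| + d.+1 <= n.
  move=> s i sS; have uS := sS _ (mem_nth v (ltn_ord i)).
  have := size_bound1 irr [set x in take i s] (SW _ uS); have := vmin _ (SW _ uS).
  rewrite -/d -/n => h1 h2; apply: leq_trans h2; by rewrite leq_add2l ltnS.
have chS : forall s : seq T, {subset s <= S} -> (forall x, x \in W -> e v x -> x \in s) ->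
    b W <= \sum_(i < size s) b (W :\: ([set x in take i s] :|: Nv e (nth v s i))).
  by move=> s sS hs; apply: chain => // u /sS; exact: Sv.
case: (leqP d 3) => hd3.
  have e1S : {subset enum S <= S} by move=> x; rewrite mem_enum.
  have e2S : forall x, x \in W -> e v x -> x \in enum S by move=> x xW ex; rewrite mem_enum inE xW ex.
  have hc := chS (enum S) e1S e2S.
  apply: Rle_trans (INR_leq hc) _.
  apply: Rle_trans (sum_INR_bound (B := (c3 ^ (n - d.+1))%R) _) _.
    by move=> i; apply: IHj (term _ i _) _ => // x; rewrite mem_enum.
  rewrite -cardE cS.
  have e1 : n - d.+1 + d.+1 = n by lia.
  by have := c3_small (n - d.+1) hd3; rewrite e1.
have d4 : d = 4 by lia.
have [a1 [a2 [a1S a2S a12 na12]]] := noK5 vS (etrans cS d4) Sv.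
have cl : size (enum (S :\ a1 :\ a2)) = 2.
  rewrite -cardE; have := cardsD1 a1 S; have := cardsD1 a2 (S :\ a1).
  have a2S1 : a2 \in S :\ a1 by rewrite in_setD1 eq_sym a12 a2S.
  rewrite a1S a2S1 cS d4; lia.
move: cl; case El : (enum (S :\ a1 :\ a2)) => [|x [|y [|z l]]] // _.
have xS : x \in S :\ a1 :\ a2 by rewrite -mem_enum El inE eqxx.
have yS : y \in S :\ a1 :\ a2 by rewrite -mem_enum El !inE eqxx orbT.
set s := [:: a1; x; y; a2].
have sS : {subset s <= S}.
  move=> u; rewrite !in_cons in_nil orbF => /or4P[] /eqP -> //.
    by move: xS => /setD1P[_ /setD1P[]].
  by move: yS => /setD1P[_ /setD1P[]].
have hs : forall u, u \in W -> e v u -> u \in s.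
  move=> u uW eu; have uS : u \in S by rewrite inE uW eu.
  rewrite !in_cons in_nil orbF; case: (eqVneq u a1) => //= ua1; case: (eqVneq u a2) => [_|ua2]; rewrite ?orbT //.
  have : u \in enum (S :\ a1 :\ a2) by rewrite mem_enum !in_setD1 ua1 ua2 uS.
  by rewrite El !in_cons in_nil orbF => /orP[] ->; rewrite ?orbT.
have hc := chS s sS hs.
apply: Rle_trans (INR_leq hc) _.
have a2W := SW _ a2S; have a1W := SW _ a1S.
have hR : #|W :\: ([set x0 in [:: a1; x; y]] :|: Nv e a2)| + 6 <= n.
  have ha : a1 \in [set x1 in [:: a1; x; y]] by rewrite inE mem_head.
  have hb : ~~ e a2 a1 by rewrite sym.
  have := size_bound2 irr a2W a1W ha a12 hb; have := vmin _ a2W.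
  rewrite -/d -/n => h1 h2; apply: leq_trans h2; rewrite leq_add2l; by rewrite !ltnS -d4.
rewrite big_ord_recr INR_add.
have n6 : 6 <= n by apply: leq_trans hR; exact: leq_addl.
have ek : forall k, 6 <= k -> k - 6 + 1 = k - 5 by move=> k; lia.
have e1 := ek n n6.
have e2 : n - 6 + 6 = n by rewrite subnK.
have h3 := c3_step4 (n - 6); rewrite e1 e2 in h3.
apply: Rle_trans (Rplus_le_compat _ _ _ (c3 ^ (n - 6))%R (sum_INR_bound (B := (c3 ^ (n - 5))%R) _) _) _.
- move=> i; apply: (IHj _ 5 _ isT).
  by have := term s (widen_ord (leqnSn 3) i) sS; rewrite d4.
- exact: (IHj _ 6 hR isT).
- have -> : INR 3 = 3%R by rewrite /=; lra.
  lra.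
Qed.

End Main.

Theorem proposition6p1 (K : fieldType) (T : finType) (e : rel T) (n : nat) :
  simple_graph e -> (#|T| <= n)%N -> K5_free e ->
  (INR (tot_betti e K) <= Rpower 3 (INR n / 4))%R.
Proof.
case=> irr sym hn K5.
rewrite -bW_setT; apply: Rle_trans (@main K T e irr sym K5 #|[set: T]| setT (leqnn _)) _.
rewrite cardsT; apply: Rle_trans (c3_mono hn) _.
rewrite -Rpower_pow; last exact: c3_pos.
rewrite /c3 Rpower_mult; apply: Req_le; congr Rpower; rewrite /Rdiv; ring.
Qed.
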